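(* Let $\mathbb S=\{(X_1,X_2,A)\in\mathbb C^2\times\mathbb R: -2\,\mathrm{Re}(X_1+X_2)-2\,\mathrm{Re}(X_1\overline{X}_2e^{-2iA})+|X_1|^2+|X_2|^2+1=0\}$ and $\mathbb S_{124}=\{(X_1,X_2,A)\in\mathbb C^2\times\mathbb R:\mathrm{Re}(\overline{X}_1e^{iA})=0\}$. Writing $X_1=a+bi$, $X_2=c+di$, the intersection $\mathbb S\cap\mathbb S_{124}$ is not transversal; it is a union of $2$-dimensional real analytic varieties, given by the equations $a+b\tan A=0$, $a+c=1$, $b-d=0$ where $A\ne\pm\pi/2+2k\pi$, and by $a+c=1$, $b=0$, $d=0$ where $A=\pm\pi/2+2k\pi$ ($k\in\mathbb Z$). *)

(* Defs.v *)
From Stdlib Require Import Reals ZArith.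
From Coquelicot Require Import Coquelicot.
Open Scope R_scope.

Definition expi (A : R) : C := (cos A, sin A).

Definition Sfun (X1 X2 : C) (A : R) : R :=
  - 2 * Re (Cplus X1 X2)
  - 2 * Re (Cmult (Cmult X1 (Cconj X2)) (expi (- 2 * A)))
  + (Cmod X1) ^ 2 + (Cmod X2) ^ 2 + 1.

Definition S124fun (X1 X2 : C) (A : R) : R :=
  Re (Cmult (Cconj X1) (expi A)).

Definition inS (X1 X2 : C) (A : R) : Prop := Sfun X1 X2 A = 0.
Definition inS124 (X1 X2 : C) (A : R) : Prop := S124fun X1 X2 A = 0.

Definition realify (f : C -> C -> R -> R) (a b c d A : R) : R :=
  f (a, b) (c, d) A.

Definition grad (f : C -> C -> R -> R) (X1 X2 : C) (A : R) : R * R * R * R * R :=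
  let a := fst X1 in let b := snd X1 in let c := fst X2 in let d := snd X2 in
  let g := realify f in
  (Derive (fun x => g x b c d A) a,
   Derive (fun x => g a x c d A) b,
   Derive (fun x => g a b x d A) c,
   Derive (fun x => g a b c x A) d,
   Derive (fun x => g a b c d x) A).

Definition lin_indep5 (u v : R * R * R * R * R) : Prop :=
  let '(u1, u2, u3, u4, u5) := u in
  let '(v1, v2, v3, v4, v5) := v in
  forall l m : R,
    l * u1 + m * v1 = 0 -> l * u2 + m * v2 = 0 -> l * u3 + m * v3 = 0 ->
    l * u4 + m * v4 = 0 -> l * u5 + m * v5 = 0 -> l = 0 /\ m = 0.

Definition transversal_at (X1 X2 : C) (A : R) : Prop :=
  lin_indep5 (grad Sfun X1 X2 A) (grad S124fun X1 X2 A).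

(* Main.v *)
Require Import Defs.
From Stdlib Require Import Reals ZArith Lra Lia Psatz.
From Coquelicot Require Import Coquelicot.
Open Scope R_scope.

Lemma Sfun_expr a b c d A : realify Sfun a b c d A =
  -2*(a+c) - 2*((a*c+b*d)*cos(-2*A) - (b*c-a*d)*sin(-2*A))
  + (a*a+b*b) + (c*c+d*d) + 1.
Proof.
  unfold realify, Sfun, Re, Cmult, Cconj, Cplus, Cmod, expi; cbn [fst snd].
  rewrite !pow2_sqrt by nra; ring.
Qed.

Lemma S124_expr a b c d A : realify S124fun a b c d A = a * cos A + b * sin A.
Proof. unfold realify, S124fun, Re, Cmult, Cconj, expi; simpl; ring. Qed.

Lemma Sfun_id a b c d A : realify Sfun a b c d A =
  (a+c-1)^2 + (b-d)^2 - 4*(c*cos A - d*sin A)*(a*cos A + b*sin A).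
Proof.
  rewrite Sfun_expr.
  replace (-2*A) with (-(2*A)) by ring.
  rewrite cos_neg, sin_neg, cos_2a, sin_2a.
  assert (H := sin2_cos2 A). unfold Rsqr in H.
  transitivity ((a+c-1)^2 + (b-d)^2 - 4*(c*cos A - d*sin A)*(a*cos A + b*sin A)
     - 2*(b*d-a*c)*(sin A * sin A + cos A * cos A - 1)); [ring|].
  rewrite H; ring.
Qed.

Lemma cos_zero_iff A : cos A = 0 <->
  exists k : Z, A = PI / 2 + 2 * IZR k * PI \/ A = - (PI / 2) + 2 * IZR k * PI.
Proof.
  split.
  - intros H. destruct (cos_eq_0_0 A H) as [k Hk].
    destruct (Zeven_odd_dec k) as [He|Ho].
    + destruct (Zeven_ex k He) as [m Hm]. exists m. left.
      rewrite Hk, Hm, mult_IZR. field.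
    + destruct (Zodd_ex k Ho) as [m Hm]. exists (m+1)%Z. right.
      rewrite Hk, Hm, plus_IZR, mult_IZR, plus_IZR. field.
  - intros [k [Hk|Hk]]; apply cos_eq_0_1.
    + exists (2*k)%Z. rewrite Hk, mult_IZR. field.
    + exists (2*k-1)%Z. rewrite Hk, minus_IZR, mult_IZR. field.
Qed.

Theorem proposition3p7 :
  (* the intersection S ∩ S_124 is not transversal *)
  ~ (forall (X1 X2 : C) (A : R),
       inS X1 X2 A -> inS124 X1 X2 A -> transversal_at X1 X2 A) /\
  (* explicit description of S ∩ S_124, with X1 = a + b i, X2 = c + d i *)
  (forall (a b c d A : R),
     (inS (a, b) (c, d) A /\ inS124 (a, b) (c, d) A) <->
     (((forall k : Z, A <> PI / 2 + 2 * IZR k * PI /\ A <> - (PI / 2) + 2 * IZR k * PI) /\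
       a + b * tan A = 0 /\ a + c = 1 /\ b - d = 0)
      \/
      ((exists k : Z, A = PI / 2 + 2 * IZR k * PI \/ A = - (PI / 2) + 2 * IZR k * PI) /\
       a + c = 1 /\ b = 0 /\ d = 0))).
Proof.
  split.
  - intros H.
    assert (HS : inS (0,0) (1,0) 0).
    { unfold inS. change (realify Sfun 0 0 1 0 0 = 0). rewrite Sfun_id. ring. }
    assert (HT : inS124 (0,0) (1,0) 0).
    { unfold inS124. change (realify S124fun 0 0 1 0 0 = 0). rewrite S124_expr. ring. }
    specialize (H _ _ _ HS HT).
    unfold transversal_at, grad in H. simpl in H.
    assert (D1 : Derive (fun x => realify Sfun x 0 1 0 0) 0 = -4).
    { rewrite (Derive_ext _ (fun x => -2*(x+1) - 2*((x*1+0*0)*cos(-2*0) - (0*1-x*0)*sin(-2*0))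
                + (x*x+0*0) + (1*1+0*0) + 1)) by (intros; apply Sfun_expr).
      apply is_derive_unique. auto_derive; auto; try (replace (-2*0) with 0 by ring); rewrite ?cos_0, ?sin_0; ring. }
    assert (D2 : Derive (fun x => realify Sfun 0 x 1 0 0) 0 = 0).
    { rewrite (Derive_ext _ (fun x => -2*(0+1) - 2*((0*1+x*0)*cos(-2*0) - (x*1-0*0)*sin(-2*0))
                + (0*0+x*x) + (1*1+0*0) + 1)) by (intros; apply Sfun_expr).
      apply is_derive_unique. auto_derive; auto; try (replace (-2*0) with 0 by ring); rewrite ?cos_0, ?sin_0; ring. }
    assert (D3 : Derive (fun x => realify Sfun 0 0 x 0 0) 1 = 0).
    { rewrite (Derive_ext _ (fun x => -2*(0+x) - 2*((0*x+0*0)*cos(-2*0) - (0*x-0*0)*sin(-2*0))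
                + (0*0+0*0) + (x*x+0*0) + 1)) by (intros; apply Sfun_expr).
      apply is_derive_unique. auto_derive; auto; try (replace (-2*0) with 0 by ring); rewrite ?cos_0, ?sin_0; ring. }
    assert (D4 : Derive (fun x => realify Sfun 0 0 1 x 0) 0 = 0).
    { rewrite (Derive_ext _ (fun x => -2*(0+1) - 2*((0*1+0*x)*cos(-2*0) - (0*1-0*x)*sin(-2*0))
                + (0*0+0*0) + (1*1+x*x) + 1)) by (intros; apply Sfun_expr).
      apply is_derive_unique. auto_derive; auto; try (replace (-2*0) with 0 by ring); rewrite ?cos_0, ?sin_0; ring. }
    assert (D5 : Derive (fun x => realify Sfun 0 0 1 0 x) 0 = 0).
    { rewrite (Derive_ext _ (fun x => -2*(0+1) - 2*((0*1+0*0)*cos(-2*x) - (0*1-0*0)*sin(-2*x))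
                + (0*0+0*0) + (1*1+0*0) + 1)) by (intros; apply Sfun_expr).
      apply is_derive_unique. auto_derive; auto; ring. }
    assert (E1 : Derive (fun x => realify S124fun x 0 1 0 0) 0 = 1).
    { rewrite (Derive_ext _ (fun x => x * cos 0 + 0 * sin 0)) by (intros; apply S124_expr).
      apply is_derive_unique. auto_derive; auto; rewrite ?cos_0, ?sin_0; ring. }
    assert (E2 : Derive (fun x => realify S124fun 0 x 1 0 0) 0 = 0).
    { rewrite (Derive_ext _ (fun x => 0 * cos 0 + x * sin 0)) by (intros; apply S124_expr).
      apply is_derive_unique. auto_derive; auto; rewrite ?cos_0, ?sin_0; ring. }
    assert (E3 : Derive (fun x => realify S124fun 0 0 x 0 0) 1 = 0).
    { rewrite (Derive_ext _ (fun x => 0 * cos 0 + 0 * sin 0)) by (intros; apply S124_expr).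
      apply is_derive_unique. auto_derive; auto; ring. }
    assert (E4 : Derive (fun x => realify S124fun 0 0 1 x 0) 0 = 0).
    { rewrite (Derive_ext _ (fun x => 0 * cos 0 + 0 * sin 0)) by (intros; apply S124_expr).
      apply is_derive_unique. auto_derive; auto; ring. }
    assert (E5 : Derive (fun x => realify S124fun 0 0 1 0 x) 0 = 0).
    { rewrite (Derive_ext _ (fun x => 0 * cos x + 0 * sin x)) by (intros; apply S124_expr).
      apply is_derive_unique. auto_derive; auto; ring. }
    unfold realify in *.
    rewrite D1, D2, D3, D4, D5, E1, E2, E3, E4, E5 in H.
    destruct (H 1 4) as [H1 _]; lra.
  - intros a b c d A. unfold inS, inS124.
    change (Sfun (a,b) (c,d) A) with (realify Sfun a b c d A).
    change (S124fun (a,b) (c,d) A) with (realify S124fun a b c d A).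
    rewrite Sfun_id, S124_expr.
    assert (Hsc := sin2_cos2 A). unfold Rsqr in Hsc.
    split.
    + intros [H1 H2]. rewrite H2 in H1.
      assert (Hq : (a+c-1)^2 + (b-d)^2 = 0) by lra.
      pose proof (pow2_ge_0 (a+c-1)); pose proof (pow2_ge_0 (b-d)).
      assert (Hq1 : (a+c-1)^2 = 0) by lra.
      assert (Hq2 : (b-d)^2 = 0) by lra.
      assert (Hac : a + c = 1).
      { destruct (Req_dec (a+c-1) 0); [lra|]. exfalso; apply (pow_nonzero _ 2 H3 Hq1). }
      assert (Hbd : b - d = 0).
      { destruct (Req_dec (b-d) 0); [lra|]. exfalso; apply (pow_nonzero _ 2 H3 Hq2). }
      destruct (Req_dec (cos A) 0) as [Hc|Hc].
      * right. split; [apply cos_zero_iff; auto|].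
        rewrite Hc in H2.
        assert (Hbs : b * sin A = 0) by lra.
        assert (Hs1 : sin A * sin A = 1) by (rewrite Hc in Hsc; lra).
        assert (b = 0) by (replace b with (b * sin A * sin A) by (rewrite Rmult_assoc, Hs1; ring); rewrite Hbs; ring).
        lra.
      * left. split; [|split; [|split]]; auto.
        -- intros k; split; intro E; apply Hc; apply cos_zero_iff; exists k; auto.
        -- replace (a + b*tan A) with ((a*cos A + b*sin A)/cos A) by (unfold tan; field; auto).
           rewrite H2; unfold Rdiv; ring.
    + intros [[Hk [Ht [Hac Hbd]]] | [Hk [Hac [Hb Hd]]]].
      * assert (Hc : cos A <> 0).
        { intro E. apply cos_zero_iff in E. destruct E as [k [E|E]]; destruct (Hk k); contradiction. }
        assert (H2 : a * cos A + b * sin A = 0).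
        { replace (a*cos A + b*sin A) with ((a + b*tan A) * cos A) by (unfold tan; field; auto).
          rewrite Ht; ring. }
        split; [rewrite H2; replace (a+c-1) with 0 by lra; replace (b-d) with 0 by lra; ring | auto].
      * apply cos_zero_iff in Hk.
        assert (H2 : a * cos A + b * sin A = 0) by (rewrite Hk, Hb; ring).
        split; [rewrite H2; replace (a+c-1) with 0 by lra; replace (b-d) with 0 by lra; ring | auto].
Qed.
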